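(* If $\mathcal{R}_{0}<1$, then the disease-free equilibrium $P^{\ast}=\left(\frac{\mu N^{2}}{p+\mu N},0,0,0,\frac{pN}{p+\mu N}\right)$ is globally asymptotically stable in $\Sigma=\{(S,E,I,R,V)\in\mathbb{R}_{+}^{5}:S+E+I+R+V=N\}$, i.e. every solution of the system below with initial datum in $\Sigma$ converges to $P^{\ast}$ as $t\to+\infty$ (and $P^{\ast}$ is stable).
   Context: Consider the SEIR model with vaccination and equal birth/death rate $\mu>0$: $S'=\mu N-\frac{\beta}{N}S(1-\rho)I-\frac{S}{N}p-\mu S$, $E'=\frac{\beta}{N}S(1-\rho)I-\sigma E-\mu E$, $I'=\sigma E-\gamma I-\mu I$, $R'=\gamma I-\mu R$, $V'=\frac{S}{N}p-\mu V$, where $N>0$ is the (constant) total population, $\beta,\sigma,\gamma>0$, $0<\rho<1$, the numbers of people vaccinated per day with the first and second dose are constants $\Delta_{1},\Delta_{2}\ge0$, the immunity fractions after each dose are $\pi_{1},\pi_{2}$, and $p=\Delta_{1}\pi_{1}+\Delta_{2}(\pi_{2}-\pi_{1})\ge0$. The set $\Sigma$ is positively invariant (nonnegative initial data give nonnegative solutions with $S+E+I+R+V=N$). The reproductive number is $\mathcal{R}_{0}=\frac{\mu N\sigma\beta(1-\rho)}{(\sigma+\mu)(\gamma+\mu)(p+\mu N)}$ (denoted $R_0$ in the paper, not to be confused with the initial value of $R$). *)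

(* Defs.v *)
From Stdlib Require Import Reals.
From Coquelicot Require Import Coquelicot.
Open Scope R_scope.

Definition vacc_p (Delta1 Delta2 pi1 pi2 : R) : R :=
  Delta1 * pi1 + Delta2 * (pi2 - pi1).

Definition repro_number (mu N beta sigma gamma rho p : R) : R :=
  mu * N * sigma * beta * (1 - rho) /
  ((sigma + mu) * (gamma + mu) * (p + mu * N)).

Definition in_Sigma (N s e i r v : R) : Prop :=
  0 <= s /\ 0 <= e /\ 0 <= i /\ 0 <= r /\ 0 <= v /\ s + e + i + r + v = N.

Definition is_solution (mu N beta sigma gamma rho p : R)
    (S E I Rc V : R -> R) : Prop :=
  (forall t, 0 < t ->
     is_derive S t (mu * N - beta / N * S t * (1 - rho) * I t
                    - S t / N * p - mu * S t) /\
     is_derive E t (beta / N * S t * (1 - rho) * I t - sigma * E t - mu * E t) /\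
     is_derive I t (sigma * E t - gamma * I t - mu * I t) /\
     is_derive Rc t (gamma * I t - mu * Rc t) /\
     is_derive V t (S t / N * p - mu * V t)) /\
  filterlim S (at_right 0) (locally (S 0)) /\
  filterlim E (at_right 0) (locally (E 0)) /\
  filterlim I (at_right 0) (locally (I 0)) /\
  filterlim Rc (at_right 0) (locally (Rc 0)) /\
  filterlim V (at_right 0) (locally (V 0)).

Definition dist5 (a1 a2 a3 a4 a5 b1 b2 b3 b4 b5 : R) : R :=
  sqrt ((a1 - b1)^2 + (a2 - b2)^2 + (a3 - b3)^2 + (a4 - b4)^2 + (a5 - b5)^2).

(* Main.v *)
Require Import Defs.
From Stdlib Require Import Reals Lra Psatz.
From Coquelicot Require Import Coquelicot.
Open Scope R_scope.

Lemma negsq_ineq x h : Rabs ((Rmin (x + h) 0)^2 - (Rmin x 0)^2 - 2 * Rmin x 0 * h) <= h^2.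
Proof.
  apply Rabs_le.
  unfold Rmin; destruct (Rle_dec (x+h) 0); destruct (Rle_dec x 0); split; nra.
Qed.

Lemma negsq_derive x : is_derive (fun y => (Rmin y 0)^2) x (2 * Rmin x 0).
Proof.
  apply is_derive_Reals. intros eps Heps.
  exists (mkposreal eps Heps). intros h Hh0 Hh. simpl in Hh.
  assert (E : (Rmin (x + h) 0 ^ 2 - Rmin x 0 ^ 2) / h - 2 * Rmin x 0
            = ((Rmin (x + h) 0)^2 - (Rmin x 0)^2 - 2 * Rmin x 0 * h) / h) by (field; auto).
  rewrite E. unfold Rdiv. rewrite Rabs_mult, Rabs_inv.
  pose proof (negsq_ineq x h) as Hi.
  assert (0 < Rabs h) by (apply Rabs_pos_lt; auto).
  apply (Rmult_lt_reg_r (Rabs h)); [lra|].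
  rewrite Rmult_assoc, Rinv_l by lra. rewrite Rmult_1_r.
  assert (h^2 = Rabs h * Rabs h) by (rewrite <- Rabs_mult; rewrite Rabs_right; nra).
  nra.
Qed.
Lemma cont_of_derive (f : R -> R) x l : is_derive f x l -> continuity_pt f x.
Proof.
  intros H. apply continuity_pt_filterlim.
  apply (ex_derive_continuous f x). exists l; exact H.
Qed.

Lemma cont_eps (f : R -> R) s e : continuity_pt f s -> 0 < e ->
  exists d, 0 < d /\ forall y, Rabs (y - s) < d -> Rabs (f y - f s) < e.
Proof.
  intros Hc He. apply continuity_pt_filterlim in Hc.
  destruct (proj1 (filterlim_locally f (f s)) Hc (mkposreal e He)) as [d Hd].
  exists d. split; [apply cond_pos|]. intros y Hy. apply (Hd y). exact Hy.
Qed.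

Lemma mono (f df : R -> R) (s t : R) : s <= t ->
  (forall x, s < x <= t -> is_derive f x (df x)) ->
  (forall x, s < x <= t -> df x <= 0) ->
  continuity_pt f s -> f t <= f s.
Proof.
  intros Hst Hd Hs Hc.
  destruct (Req_dec s t) as [->|Hne]; [lra|].
  assert (Heps : forall e, s < e < t -> f t <= f e).
  { intros e He.
    destruct (MVT_gen f e t df) as [c [Hc1 Hc2]].
    - rewrite Rmin_left by lra; rewrite Rmax_right by lra.
      intros x Hx; apply Hd; lra.
    - rewrite Rmin_left by lra; rewrite Rmax_right by lra.
      intros x Hx. apply (cont_of_derive f x (df x)); apply Hd; lra.
    - rewrite Rmin_left in Hc1 by lra; rewrite Rmax_right in Hc1 by lra.
      assert (df c <= 0) by (apply Hs; lra). nra. }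
  destruct (Rle_lt_dec (f t) (f s)) as [|Hlt]; [assumption|].
  destruct (cont_eps f s (f t - f s) Hc) as [d [Hd0 Hdd]]; [lra|].
  set (y := s + Rmin d (t - s) / 2).
  assert (Hm1 : 0 < Rmin d (t - s)) by (apply Rmin_glb_lt; lra).
  assert (Hm2 : Rmin d (t - s) <= d) by apply Rmin_l.
  assert (Hm3 : Rmin d (t - s) <= t - s) by apply Rmin_r.
  assert (Hy : Rabs (y - s) < d) by (unfold y; rewrite Rabs_right; lra).
  specialize (Hdd y Hy). apply Rabs_lt_between in Hdd.
  specialize (Heps y). unfold y in *. 
  assert (f t <= f (s + Rmin d (t - s) / 2)) by (apply Heps; lra). lra.
Qed.

Definition nsq (y : R) := (Rmin y 0)^2.

Lemma is_derive_eq (f : R -> R) x l l' : is_derive f x l -> l = l' -> is_derive f x l'.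
Proof. intros H ->; exact H. Qed.

Lemma nsq_comp_derive (f : R -> R) x l : is_derive f x l ->
  is_derive (fun y => nsq (f y)) x (2 * Rmin (f x) 0 * l).
Proof.
  intros H. eapply is_derive_eq.
  - apply (is_derive_comp nsq f x); [apply negsq_derive | exact H].
  - unfold scal; simpl; unfold mult; simpl. ring.
Qed.

Lemma cont_nsq_comp (f : R -> R) x : continuity_pt f x -> continuity_pt (fun y => nsq (f y)) x.
Proof.
  intros H. apply (continuity_pt_comp f nsq x H).
  apply (cont_of_derive _ _ _ (negsq_derive (f x))).
Qed.

Lemma cont_exp_lin k x : continuity_pt (fun y => exp (k * y)) x.
Proof.
  apply (cont_of_derive _ _ (k * exp (k * x))). auto_derive; auto. ring.
Qed.

Lemma pos2 (f g df dg : R -> R) C T : 0 <= C ->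
  (forall x, 0 < x <= T -> is_derive f x (df x) /\ is_derive g x (dg x)) ->
  (forall x, 0 < x <= T -> Rmin (f x) 0 * df x + Rmin (g x) 0 * dg x
                        <= C * ((Rmin (f x) 0)^2 + (Rmin (g x) 0)^2)) ->
  continuity_pt f 0 -> continuity_pt g 0 -> 0 <= f 0 -> 0 <= g 0 ->
  forall t, 0 <= t <= T -> 0 <= f t /\ 0 <= g t.
Proof.
  intros HC Hd Hs Hcf Hcg Hf0 Hg0 t Ht.
  set (psi := fun x => exp (- (2 * C) * x) * (nsq (f x) + nsq (g x))).
  assert (Hp : psi t <= psi 0).
  { apply (mono psi (fun x => exp (- (2 * C) * x) *
       (2 * Rmin (f x) 0 * df x + 2 * Rmin (g x) 0 * dg x
        - 2 * C * (nsq (f x) + nsq (g x))))); [lra| | |].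
    - intros x Hx. destruct (Hd x) as [H1 H2]; [lra|].
      pose proof (nsq_comp_derive f x _ H1) as D1.
      pose proof (nsq_comp_derive g x _ H2) as D2.
      unfold psi. eapply is_derive_eq.
      + apply (is_derive_mult (fun x => exp (- (2 * C) * x)) (fun x => nsq (f x) + nsq (g x))).
        * auto_derive; auto.
        * apply (is_derive_plus (fun y => nsq (f y)) (fun y => nsq (g y))); eauto.
        * intros; apply Rmult_comm.
      + unfold plus, mult; simpl. ring.
    - intros x Hx. specialize (Hs x ltac:(lra)).
      assert (0 < exp (- (2 * C) * x)) by apply exp_pos.
      unfold nsq. nra.
    - unfold psi. apply continuity_pt_mult; [apply cont_exp_lin|].
      apply continuity_pt_plus; apply cont_nsq_comp; assumption. }
  unfold psi, nsq in Hp. rewrite Rmult_0_r, exp_0 in Hp.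
  rewrite (Rmin_right (f 0)), (Rmin_right (g 0)) in Hp by lra.
  assert (0 < exp (- (2 * C) * t)) by apply exp_pos.
  assert (Q : Rmin (f t) 0 ^ 2 + Rmin (g t) 0 ^ 2 <= 0).
  { apply (Rmult_le_reg_l (exp (- (2 * C) * t))); [lra|]. lra. }
  assert (Q1 : Rmin (f t) 0 = 0) by nra.
  assert (Q2 : Rmin (g t) 0 = 0) by nra.
  split.
  - unfold Rmin in Q1; destruct (Rle_dec (f t) 0); lra.
  - unfold Rmin in Q2; destruct (Rle_dec (g t) 0); lra.
Qed.

Lemma cmp_le (f df : R -> R) k A s t : s <= t ->
  (forall x, s < x <= t -> is_derive f x (df x)) ->
  (forall x, s < x <= t -> df x <= - k * (f x - A)) ->
  continuity_pt f s -> f t - A <= (f s - A) * exp (- k * (t - s)).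
Proof.
  intros Hst Hd Hs Hc.
  assert (M : exp (k * t) * (f t - A) <= exp (k * s) * (f s - A)).
  { apply (mono (fun x => exp (k * x) * (f x - A))
                (fun x => exp (k * x) * (df x + k * (f x - A)))); [lra| | |].
    - intros x Hx. specialize (Hd x Hx). auto_derive.
      + exists (df x); exact Hd.
      + match goal with |- context [Derive ?g x] => replace (Derive g x) with (df x) by (symmetry; apply is_derive_unique; exact Hd) end. ring.
    - intros x Hx. specialize (Hs x Hx). pose proof (exp_pos (k * x)). nra.
    - apply continuity_pt_mult; [apply cont_exp_lin|].
      apply continuity_pt_minus; [exact Hc| apply continuity_pt_const; intros u v; reflexivity]. }
  assert (E1 : exp (- k * (t - s)) = exp (k * s) * exp (- (k * t))).
  { rewrite <- exp_plus. f_equal. ring. }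
  assert (E2 : exp (k * t) * exp (- (k * t)) = 1).
  { rewrite <- exp_plus. replace (k * t + - (k * t)) with 0 by ring. apply exp_0. }
  pose proof (exp_pos (- (k * t))).
  rewrite E1.
  replace (f t - A) with (exp (- (k * t)) * (exp (k * t) * (f t - A))) by
    (rewrite <- Rmult_assoc, (Rmult_comm (exp (- (k*t)))), E2; ring).
  replace ((f s - A) * (exp (k * s) * exp (- (k * t)))) with
    (exp (- (k * t)) * (exp (k * s) * (f s - A))) by ring.
  apply Rmult_le_compat_l; lra.
Qed.

Lemma cmp_ge (f df : R -> R) k A s t : s <= t ->
  (forall x, s < x <= t -> is_derive f x (df x)) ->
  (forall x, s < x <= t -> - k * (f x - A) <= df x) ->
  continuity_pt f s -> (f s - A) * exp (- k * (t - s)) <= f t - A.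
Proof.
  intros Hst Hd Hs Hc.
  pose proof (cmp_le (fun x => - f x) (fun x => - df x) k (- A) s t Hst) as H.
  assert (H' : - f t - - A <= (- f s - - A) * exp (- k * (t - s))).
  { apply H.
    - intros x Hx. apply (is_derive_opp f x (df x)). auto.
    - intros x Hx. specialize (Hs x Hx). lra.
    - apply continuity_pt_opp; exact Hc. }
  lra.
Qed.

Lemma exp_ge_lin X : 0 <= X -> 1 + X <= exp X.
Proof.
  intros H. destruct (Req_dec X 0) as [->|Hn].
  - rewrite exp_0; lra.
  - left; apply exp_ineq1; auto.
Qed.

Lemma decay1 D B X : D <= B -> 0 <= B -> 0 <= X -> D * exp (- X) <= B / (1 + X).
Proof.
  intros HD HB HX.
  pose proof (exp_ge_lin X HX).
  assert (E : exp (- X) = / exp X) by apply exp_Ropp.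
  pose proof (exp_pos X).
  rewrite E.
  apply Rle_trans with (B * / exp X).
  - apply Rmult_le_compat_r; [left; apply Rinv_0_lt_compat; lra| lra].
  - unfold Rdiv. apply Rmult_le_compat_l; [lra|].
    apply Rinv_le_contravar; lra.
Qed.

Lemma decay2 D d X : D < d -> 0 < d -> 0 <= X -> D * exp (- X) < d.
Proof.
  intros HD Hd HX.
  pose proof (exp_pos (- X)).
  assert (exp (- X) <= 1).
  { rewrite <- exp_0. destruct (Req_dec X 0) as [->|]; [rewrite Ropp_0; lra|].
    left; apply exp_increasing; lra. }
  destruct (Rle_lt_dec D 0); nra.
Qed.

Lemma ext_props (X dX : R -> R) :
  (forall t, 0 < t -> is_derive X t (dX t)) ->
  filterlim X (at_right 0) (locally (X 0)) ->
  (forall t, 0 < t -> is_derive (fun y => X (Rmax y 0)) t (dX t)) /\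
  (forall x, continuity_pt (fun y => X (Rmax y 0)) x) /\
  (forall t, 0 <= t -> X (Rmax t 0) = X t).
Proof.
  intros Hd Hr.
  assert (Hloc : forall t, 0 < t -> locally t (fun y => X y = X (Rmax y 0))).
  { intros t Ht. exists (mkposreal t Ht). intros y Hy.
    change (Rabs (y - t) < t) in Hy. apply Rabs_lt_between in Hy.
    rewrite Rmax_left by lra. reflexivity. }
  split; [|split].
  - intros t Ht. apply (is_derive_ext_loc X); [apply Hloc; exact Ht| apply Hd; exact Ht].
  - intros x. destruct (Rlt_or_le 0 x) as [Hx|Hx].
    + apply continuity_pt_filterlim.
      rewrite (Rmax_left x 0) by lra.
      pose proof (ex_derive_continuous X x (ex_intro _ _ (Hd x Hx))) as Hc.
      apply (filterlim_ext_loc X); [apply Hloc; exact Hx|].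
      exact Hc.
    + apply continuity_pt_filterlim. apply filterlim_locally. intros eps.
      destruct (Req_dec x 0) as [->|Hx0].
      * pose proof (proj1 (filterlim_locally X (X 0)) Hr eps) as [d Hd'].
        exists d. intros y Hy. rewrite (Rmax_right 0 0) by lra.
        destruct (Rle_lt_dec y 0) as [Hy0|Hy0].
        -- rewrite Rmax_right by lra. apply ball_center.
        -- rewrite Rmax_left by lra. apply Hd'; auto.
      * assert (Hxn : 0 < - x) by lra.
        exists (mkposreal (- x) Hxn). intros y Hy.
        change (Rabs (y - x) < - x) in Hy. apply Rabs_lt_between in Hy.
        rewrite (Rmax_right x 0) by lra. rewrite (Rmax_right y 0) by lra.
        apply ball_center.
  - intros t Ht. rewrite Rmax_left by lra. reflexivity.
Qed.

Definition tends (f : R -> R) (l : R) :=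
  forall e, 0 < e -> exists M, forall t, M <= t -> Rabs (f t - l) < e.

Lemma tends_is_lim f l : tends f l -> is_lim f p_infty l.
Proof.
  intros H. apply is_lim_spec. intros eps.
  destruct (H eps (cond_pos eps)) as [M HM].
  exists M. intros x Hx. apply HM. lra.
Qed.

Lemma mul_np x y : x <= 0 -> 0 <= y -> x * y <= 0.
Proof. intros; nra. Qed.

Definition nsol (mu N a r sg gm : R) (S E I Rc V : R -> R) :=
  (forall t, 0 < t ->
     is_derive S t (mu * N - a * S t * I t - (r + mu) * S t) /\
     is_derive E t (a * S t * I t - (sg + mu) * E t) /\
     is_derive I t (sg * E t - (gm + mu) * I t) /\
     is_derive Rc t (gm * I t - mu * Rc t) /\
     is_derive V t (r * S t - mu * V t)) /\
  (forall x, continuity_pt S x /\ continuity_pt E x /\ continuity_pt I x /\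
             continuity_pt Rc x /\ continuity_pt V x).

Lemma bound_on (f : R -> R) T : 0 <= T -> (forall x, continuity_pt f x) ->
  exists M, 0 <= M /\ forall x, 0 <= x <= T -> Rabs (f x) <= M.
Proof.
  intros HT Hc.
  destruct (continuity_ab_maj f 0 T HT (fun c _ => Hc c)) as [xM [HM _]].
  destruct (continuity_ab_min f 0 T HT (fun c _ => Hc c)) as [xm [Hm _]].
  exists (Rabs (f xM) + Rabs (f xm)). split.
  - pose proof (Rabs_pos (f xM)); pose proof (Rabs_pos (f xm)); lra.
  - intros x Hx. specialize (HM x Hx). specialize (Hm x Hx).
    apply Rabs_le.
    pose proof (Rle_abs (f xM)); pose proof (Rabs_pos (f xm));
    pose proof (Rabs_pos (f xM)).
    pose proof (Rle_abs (- f xm)) as H3. rewrite Rabs_Ropp in H3. lra.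
Qed.

Lemma is_derive_zero x : is_derive (fun _ : R => 0) x 0.
Proof. apply (is_derive_const 0 x). Qed.

Lemma Rmin00 : Rmin 0 0 = 0.
Proof. unfold Rmin; destruct (Rle_dec 0 0); lra. Qed.

Lemma nsol_pos mu N a r sg gm S E I Rc V :
  0 < mu -> 0 < N -> 0 < a -> 0 <= r -> 0 < sg -> 0 < gm ->
  nsol mu N a r sg gm S E I Rc V ->
  in_Sigma N (S 0) (E 0) (I 0) (Rc 0) (V 0) ->
  forall t, 0 <= t -> in_Sigma N (S t) (E t) (I t) (Rc t) (V t).
Proof.
  intros Hmu HN Ha Hr Hsg Hgm [Hd Hc] [HS0 [HE0 [HI0 [HR0 [HV0 Hsum0]]]]].
  assert (Hsum : forall t, 0 <= t -> S t + E t + I t + Rc t + V t = N).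
  { intros t Ht.
    set (T := fun x => S x + E x + I x + Rc x + V x).
    assert (HdT : forall x, 0 < x <= t -> is_derive T x (- mu * (T x - N))).
    { intros x Hx. destruct (Hd x ltac:(lra)) as [D1 [D2 [D3 [D4 D5]]]].
      eapply is_derive_eq.
      - unfold T. apply (is_derive_plus (fun x => S x + E x + I x + Rc x) V); [|exact D5].
        apply (is_derive_plus (fun x => S x + E x + I x) Rc); [|exact D4].
        apply (is_derive_plus (fun x => S x + E x) I); [|exact D3].
        apply (is_derive_plus S E); [exact D1|exact D2].
      - unfold T, plus; simpl. ring. }
    assert (HcT : continuity_pt T 0).
    { unfold T. destruct (Hc 0) as [C1 [C2 [C3 [C4 C5]]]].
      repeat apply continuity_pt_plus; assumption. }
    pose proof (cmp_le T _ mu N 0 t Ht HdT (fun x _ => Rle_refl _) HcT) as U.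
    pose proof (cmp_ge T _ mu N 0 t Ht HdT (fun x _ => Rle_refl _) HcT) as L.
    unfold T in U, L |- *. rewrite Hsum0 in U, L.
    replace ((N - N) * exp (- mu * (t - 0))) with 0 in U, L by ring. lra. }
  assert (HSp : forall t, 0 <= t -> 0 <= S t).
  { intros t Ht.
    destruct (bound_on I t Ht (fun x => proj1 (proj2 (proj2 (Hc x))))) as [M [HM0 HM]].
    refine (proj1 (pos2 S (fun _ => 0) (fun x => mu * N - a * S x * I x - (r + mu) * S x)
                    (fun _ => 0) (a * M) t _ _ _ _ _ HS0 (Rle_refl 0) t _)).
    - nra.
    - intros x Hx. split; [apply (Hd x ltac:(lra))| apply is_derive_zero].
    - intros x Hx. rewrite Rmin00.
      specialize (HM x ltac:(lra)). apply Rabs_le_between in HM.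
      unfold Rmin; destruct (Rle_dec (S x) 0) as [Hs|Hs].
      + assert (0 <= a * (S x * S x) * (M + I x)).
        { apply Rmult_le_pos; [apply Rmult_le_pos; nra| lra]. }
        assert (S x * (mu * N) <= 0) by (apply mul_np; nra). assert (0 <= (r + mu) * (S x * S x)) by nra. nra.
      + nra.
    - apply Hc.
    - apply continuity_pt_const; intros u v; reflexivity.
    - lra. }
  assert (HEI : forall t, 0 <= t -> 0 <= E t /\ 0 <= I t).
  { intros t Ht.
    destruct (bound_on S t Ht (fun x => proj1 (Hc x))) as [M [HM0 HM]].
    refine (pos2 E I (fun x => a * S x * I x - (sg + mu) * E x)
                    (fun x => sg * E x - (gm + mu) * I x) (a * M + sg) t _ _ _ _ _ HE0 HI0 t _).
    - nra.
    - intros x Hx. destruct (Hd x ltac:(lra)) as [_ [D2 [D3 _]]]. split; assumption.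
    - intros x Hx.
      specialize (HM x ltac:(lra)). apply Rabs_le_between in HM.
      pose proof (HSp x ltac:(lra)) as HSx.
      assert (0 <= a * M) by (apply Rmult_le_pos; lra).
      unfold Rmin; destruct (Rle_dec (E x) 0) as [He|He];
        destruct (Rle_dec (I x) 0) as [Hi|Hi].
      + assert (0 <= E x * I x) by nra.
        assert (a * S x * (E x * I x) <= a * M * (E x * I x)).
        { apply Rmult_le_compat_r; [lra|]. apply Rmult_le_compat_l; lra. }
        assert (2 * (E x * I x) <= E x * E x + I x * I x) by (pose proof (Rle_0_sqr (E x - I x)); unfold Rsqr in *; nra).
        assert (0 <= a * M) by nra.
        assert (0 <= (sg + mu) * (E x * E x)) by nra.
        assert (0 <= (gm + mu) * (I x * I x)) by nra.
        assert (a * M * (E x * I x) <= a * M * (E x * E x + I x * I x)) by nra.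
        assert (sg * (E x * I x) <= sg * (E x * E x + I x * I x)) by nra.
        simpl. lra.
      + assert (0 <= a * S x * I x) by (apply Rmult_le_pos; [nra|lra]).
        assert (E x * (a * S x * I x) <= 0) by (apply mul_np; lra).
        assert (0 <= (sg + mu) * (E x * E x)) by nra.
        assert (0 <= (a * M + sg) * (E x * E x)) by nra.
        simpl. lra.
      + apply Rnot_le_lt in He. assert (0 <= E x * sg) by nra.
        assert (I x * (sg * E x) <= 0) by (apply mul_np; nra).
        assert (0 <= (gm + mu) * (I x * I x)) by nra.
        assert (0 <= (a * M + sg) * (I x * I x)) by nra.
        simpl. lra.
      + nra.
    - apply Hc.
    - apply Hc.
    - lra. }
  assert (HRp : forall t, 0 <= t -> 0 <= Rc t).
  { intros t Ht.
    refine (proj1 (pos2 Rc (fun _ => 0) (fun x => gm * I x - mu * Rc x)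
                    (fun _ => 0) 0 t _ _ _ _ _ HR0 (Rle_refl 0) t _)).
    - lra.
    - intros x Hx. split; [apply (Hd x ltac:(lra))| apply is_derive_zero].
    - intros x Hx. rewrite Rmin00.
      pose proof (proj2 (HEI x ltac:(lra))).
      unfold Rmin; destruct (Rle_dec (Rc x) 0).
      + assert (Rc x * (gm * I x) <= 0) by (apply mul_np; nra).
        assert (0 <= mu * (Rc x * Rc x)) by nra. simpl; lra.
      + simpl; lra.
    - apply Hc.
    - apply continuity_pt_const; intros u v; reflexivity.
    - lra. }
  assert (HVp : forall t, 0 <= t -> 0 <= V t).
  { intros t Ht.
    refine (proj1 (pos2 V (fun _ => 0) (fun x => r * S x - mu * V x)
                    (fun _ => 0) 0 t _ _ _ _ _ HV0 (Rle_refl 0) t _)).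
    - lra.
    - intros x Hx. split; [apply (Hd x ltac:(lra))| apply is_derive_zero].
    - intros x Hx. rewrite Rmin00.
      pose proof (HSp x ltac:(lra)).
      unfold Rmin; destruct (Rle_dec (V x) 0).
      + assert (V x * (r * S x) <= 0) by (apply mul_np; nra).
        assert (0 <= mu * (V x * V x)) by nra. simpl; lra.
      + simpl; lra.
    - apply Hc.
    - apply continuity_pt_const; intros u v; reflexivity.
    - lra. }
  intros t Ht. unfold in_Sigma.
  repeat split; try apply HSp; try apply HEI; try apply HRp; try apply HVp; auto.
Qed.

Lemma B1 mu N a r sg gm S E I Rc V s t :
  0 < mu -> 0 < N -> 0 < a -> 0 <= r ->
  nsol mu N a r sg gm S E I Rc V ->
  (forall t, 0 <= t -> in_Sigma N (S t) (E t) (I t) (Rc t) (V t)) ->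
  0 <= s <= t ->
  S t - mu * N / (r + mu) <= (S s - mu * N / (r + mu)) * exp (- (r + mu) * (t - s)).
Proof.
  intros Hmu HN Ha Hr [Hd Hc] Hp Hst.
  apply (cmp_le S (fun x => mu * N - a * S x * I x - (r + mu) * S x)); [lra| | |apply Hc].
  - intros x Hx. apply Hd; lra.
  - intros x Hx. destruct (Hp x ltac:(lra)) as [HS [HE [HI _]]].
    assert (0 <= a * S x * I x) by (apply Rmult_le_pos; [apply Rmult_le_pos|]; lra).
    assert (E1 : - (r + mu) * (S x - mu * N / (r + mu)) = mu * N - (r + mu) * S x) by (field; lra).
    rewrite E1. lra.
Qed.

Lemma B2 mu N a r sg gm S E I Rc V s t th dl S1 :
  0 < mu -> 0 < N -> 0 < a -> 0 <= r -> 0 < sg -> 0 < gm ->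
  nsol mu N a r sg gm S E I Rc V ->
  (forall t, 0 <= t -> in_Sigma N (S t) (E t) (I t) (Rc t) (V t)) ->
  0 <= s <= t -> 0 < th -> dl <= (sg + mu) - th * sg -> dl * th <= th * (gm + mu) - a * S1 ->
  (forall x, s <= x <= t -> S x <= S1) ->
  E t + th * I t <= (E s + th * I s) * exp (- dl * (t - s)).
Proof.
  intros Hmu HN Ha Hr Hsg Hgm [Hd Hc] Hp Hst Hth H1 H2 HS1.
  pose proof (cmp_le (fun x => E x + th * I x)
    (fun x => a * S x * I x - (sg + mu) * E x + th * (sg * E x - (gm + mu) * I x))
    dl 0 s t) as C.
  rewrite !Rminus_0_r in C. apply C; clear C.
  - lra.
  - intros x Hx. destruct (Hd x ltac:(lra)) as [_ [D2 [D3 _]]].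
    eapply is_derive_eq.
    + apply (is_derive_plus E (fun x => th * I x)); [exact D2|].
      apply is_derive_scal; exact D3.
    + unfold plus; simpl. ring.
  - intros x Hx. destruct (Hp x ltac:(lra)) as [HS [HE [HI _]]].
    specialize (HS1 x ltac:(lra)).
    assert (E x * (th * sg - (sg + mu) + dl) <= 0) by (rewrite Rmult_comm; apply mul_np; lra).
    assert (a * S x <= a * S1) by (apply Rmult_le_compat_l; lra).
    assert (I x * (a * S x - th * (gm + mu) + dl * th) <= 0) by (rewrite Rmult_comm; apply mul_np; lra).
    nra.
  - destruct (Hc s) as [_ [C2 [C3 _]]].
    apply continuity_pt_plus; [exact C2|].
    apply continuity_pt_scal; exact C3.
Qed.

Lemma B3 mu N a r sg gm S E I Rc V s t ep :
  0 < mu -> 0 < gm ->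
  nsol mu N a r sg gm S E I Rc V ->
  0 <= s <= t ->
  (forall x, s <= x <= t -> I x <= ep) ->
  Rc t - gm * ep / mu <= (Rc s - gm * ep / mu) * exp (- mu * (t - s)).
Proof.
  intros Hmu Hgm [Hd Hc] Hst HI.
  apply (cmp_le Rc (fun x => gm * I x - mu * Rc x)); [lra| | |apply Hc].
  - intros x Hx. apply Hd; lra.
  - intros x Hx. specialize (HI x ltac:(lra)).
    assert (E1 : - mu * (Rc x - gm * ep / mu) = gm * ep - mu * Rc x) by (field; lra).
    rewrite E1. nra.
Qed.

Lemma B4 mu N a r sg gm S E I Rc V s t ep :
  0 < mu -> 0 < N -> 0 < a -> 0 <= r -> 0 <= ep ->
  nsol mu N a r sg gm S E I Rc V ->
  (forall t, 0 <= t -> in_Sigma N (S t) (E t) (I t) (Rc t) (V t)) ->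
  0 <= s <= t ->
  (forall x, s <= x <= t -> I x <= ep) ->
  (S s - mu * N / (r + mu + a * ep)) * exp (- (r + mu + a * ep) * (t - s))
    <= S t - mu * N / (r + mu + a * ep).
Proof.
  intros Hmu HN Ha Hr Hep [Hd Hc] Hp Hst HI.
  apply (cmp_ge S (fun x => mu * N - a * S x * I x - (r + mu) * S x)); [lra| | |apply Hc].
  - intros x Hx. apply Hd; lra.
  - intros x Hx. specialize (HI x ltac:(lra)).
    destruct (Hp x ltac:(lra)) as [HS _].
    assert (E1 : - (r + mu + a * ep) * (S x - mu * N / (r + mu + a * ep))
                 = mu * N - (r + mu + a * ep) * S x) by (field; nra).
    rewrite E1.
    assert (a * S x * I x <= a * S x * ep) by (apply Rmult_le_compat_l; [nra|lra]).
    nra.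
Qed.

Lemma decay1' D B k tau : D <= B -> 0 <= B -> 0 <= k -> 0 <= tau ->
  D * exp (- k * tau) <= B / (1 + k * tau).
Proof.
  intros. replace (- k * tau) with (- (k * tau)) by ring.
  apply decay1; auto. apply Rmult_le_pos; auto.
Qed.

Lemma decay2' D d k tau : D < d -> 0 < d -> 0 <= k -> 0 <= tau ->
  D * exp (- k * tau) < d.
Proof.
  intros. replace (- k * tau) with (- (k * tau)) by ring.
  apply decay2; auto. apply Rmult_le_pos; auto.
Qed.

Lemma frac_le B X e : 0 < e -> 0 <= B -> B / e <= X -> B / (1 + X) <= e.
Proof.
  intros He HB HX.
  assert (0 <= X) by (apply Rle_trans with (B / e); [apply Rdiv_le_0_compat|]; lra).
  assert (B <= e * X).
  { apply (Rmult_le_compat_l e) in HX; [|lra].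
    replace (e * (B / e)) with B in HX by (field; lra). exact HX. }
  unfold Rdiv. apply (Rmult_le_reg_r (1 + X)); [lra|].
  rewrite Rmult_assoc, Rinv_l by lra. nra.
Qed.

Lemma div_lt1 X Y : 0 < Y -> X / Y < 1 -> X < Y.
Proof.
  intros HY H. assert (E : X = X / Y * Y) by (field; lra). rewrite E. nra.
Qed.

Lemma exist_consts a sg k1 k2 Ss : 0 < a -> 0 < sg -> 0 < k1 -> 0 < k2 -> 0 <= Ss ->
  a * sg * Ss < k1 * k2 ->
  exists eta th dl, 0 < eta /\ 0 < th /\ 0 < dl /\ dl <= k1 - th * sg /\
    dl * th <= th * k2 - a * (Ss + eta).
Proof.
  intros Ha Hsg Hk1 Hk2 HSs H.
  set (eta := (k1 * k2 - a * sg * Ss) / (2 * (a * sg))).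
  assert (Heta : 0 < eta) by (unfold eta; apply Rdiv_lt_0_compat; nra).
  assert (HS1 : a * sg * (Ss + eta) = (k1 * k2 + a * sg * Ss) / 2) by (unfold eta; field; lra).
  set (S1 := Ss + eta) in *.
  set (th := (a * S1 / k2 + k1 / sg) / 2).
  assert (Hth : 0 < th).
  { unfold th. assert (0 < k1 / sg) by (apply Rdiv_lt_0_compat; lra).
    assert (0 <= a * S1 / k2) by (apply Rdiv_le_0_compat; [unfold S1; nra|lra]). lra. }
  set (d1 := k1 - th * sg).
  set (d2 := th * k2 - a * S1).
  assert (Hd1 : d1 = (k1 * k2 - a * sg * S1) / (2 * k2)) by (unfold d1, th; field; lra).
  assert (Hd2 : d2 = (k1 * k2 - a * sg * S1) / (2 * sg)) by (unfold d2, th; field; lra).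
  assert (Hd1p : 0 < d1) by (rewrite Hd1; apply Rdiv_lt_0_compat; lra).
  assert (Hd2p : 0 < d2) by (rewrite Hd2; apply Rdiv_lt_0_compat; lra).
  exists eta, th, (Rmin d1 (d2 / th)). repeat split; auto.
  - apply Rmin_glb_lt; [lra| apply Rdiv_lt_0_compat; lra].
  - apply Rmin_l.
  - pose proof (Rmin_r d1 (d2 / th)).
    apply Rle_trans with (d2 / th * th).
    + apply Rmult_le_compat_r; lra.
    + replace (d2 / th * th) with d2 by (field; lra). unfold d2, S1. lra.
Qed.

Lemma dist5_comp a1 a2 a3 a4 a5 b1 b2 b3 b4 b5 d :
  dist5 a1 a2 a3 a4 a5 b1 b2 b3 b4 b5 < d ->
  Rabs (a1 - b1) < d /\ Rabs (a2 - b2) < d /\ Rabs (a3 - b3) < d /\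
  Rabs (a4 - b4) < d /\ Rabs (a5 - b5) < d.
Proof.
  unfold dist5. intros H.
  assert (K : forall x, x ^ 2 <= (a1 - b1) ^ 2 + (a2 - b2) ^ 2 + (a3 - b3) ^ 2 + (a4 - b4) ^ 2 + (a5 - b5) ^ 2 ->
     Rabs x < d).
  { intros x Hx. rewrite <- (sqrt_pow2 (Rabs x)) by apply Rabs_pos.
    eapply Rle_lt_trans; [|exact H].
    apply sqrt_le_1; [apply pow2_ge_0| |].
    - pose proof (pow2_ge_0 (a1 - b1)); pose proof (pow2_ge_0 (a2 - b2));
      pose proof (pow2_ge_0 (a3 - b3)); pose proof (pow2_ge_0 (a4 - b4));
      pose proof (pow2_ge_0 (a5 - b5)). lra.
    - rewrite <- Rsqr_pow2, <- Rsqr_abs, Rsqr_pow2. exact Hx. }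
  pose proof (pow2_ge_0 (a1 - b1)); pose proof (pow2_ge_0 (a2 - b2));
  pose proof (pow2_ge_0 (a3 - b3)); pose proof (pow2_ge_0 (a4 - b4));
  pose proof (pow2_ge_0 (a5 - b5)).
  repeat split; apply K; lra.
Qed.

Lemma dist5_small a1 a2 a3 a4 a5 b1 b2 b3 b4 b5 eps : 0 < eps ->
  Rabs (a1 - b1) < eps / 3 -> Rabs (a2 - b2) < eps / 3 -> Rabs (a3 - b3) < eps / 3 ->
  Rabs (a4 - b4) < eps / 3 -> Rabs (a5 - b5) < eps / 3 ->
  dist5 a1 a2 a3 a4 a5 b1 b2 b3 b4 b5 < eps.
Proof.
  intros He H1 H2 H3 H4 H5. unfold dist5.
  assert (Q : forall x, Rabs x < eps / 3 -> x ^ 2 < eps ^ 2 / 9).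
  { intros x Hx. rewrite <- Rsqr_pow2, Rsqr_abs, Rsqr_pow2.
    pose proof (Rabs_pos x). nra. }
  apply Q in H1; apply Q in H2; apply Q in H3; apply Q in H4; apply Q in H5.
  rewrite <- (sqrt_pow2 eps) by lra.
  apply sqrt_lt_1.
  - pose proof (pow2_ge_0 (a1 - b1)); pose proof (pow2_ge_0 (a2 - b2));
    pose proof (pow2_ge_0 (a3 - b3)); pose proof (pow2_ge_0 (a4 - b4));
    pose proof (pow2_ge_0 (a5 - b5)). lra.
  - apply pow2_ge_0.
  - assert (0 < eps ^ 2) by (apply pow_lt; lra). lra.
Qed.

Definition ext (X : R -> R) := fun t => X (Rmax t 0).

Lemma tends_ext X l : tends (ext X) l -> tends X l.
Proof.
  intros H e He. destruct (H e He) as [M HM]. exists (Rmax M 0).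
  intros t Ht. pose proof (Rmax_l M 0); pose proof (Rmax_r M 0).
  specialize (HM t ltac:(lra)). unfold ext in HM. rewrite Rmax_left in HM by lra. exact HM.
Qed.

Lemma sol_to_nsol mu N beta sigma gamma rho p S E I Rc V :
  0 < N ->
  is_solution mu N beta sigma gamma rho p S E I Rc V ->
  nsol mu N (beta / N * (1 - rho)) (p / N) sigma gamma (ext S) (ext E) (ext I) (ext Rc) (ext V).
Proof.
  intros HN [Hd [HcS [HcE [HcI [HcR HcV]]]]].
  destruct (ext_props S _ (fun t Ht => proj1 (Hd t Ht)) HcS) as [DS [CS ES]].
  destruct (ext_props E _ (fun t Ht => proj1 (proj2 (Hd t Ht))) HcE) as [DE [CE EE]].
  destruct (ext_props I _ (fun t Ht => proj1 (proj2 (proj2 (Hd t Ht)))) HcI) as [DI [CI EI]].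
  destruct (ext_props Rc _ (fun t Ht => proj1 (proj2 (proj2 (proj2 (Hd t Ht))))) HcR) as [DR [CR ER]].
  destruct (ext_props V _ (fun t Ht => proj2 (proj2 (proj2 (proj2 (Hd t Ht))))) HcV) as [DV [CV EV]].
  split.
  - intros t Ht. unfold ext.
    rewrite (ES t), (EE t), (EI t), (ER t), (EV t) by lra.
    split; [|split; [|split; [|split]]].
    + eapply is_derive_eq; [apply DS; exact Ht|]. simpl. field. lra.
    + eapply is_derive_eq; [apply DE; exact Ht|]. simpl. field. lra.
    + eapply is_derive_eq; [apply DI; exact Ht|]. simpl. ring.
    + eapply is_derive_eq; [apply DR; exact Ht|]. simpl. ring.
    + eapply is_derive_eq; [apply DV; exact Ht|]. simpl. field. lra.
  - intros x. split; [|split; [|split; [|split]]]; auto.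
Qed.

Lemma gap q A a ep : 0 < q -> 0 <= A -> 0 < a -> 0 <= ep ->
  0 <= A / (q + a * ep) /\ A / (q + a * ep) <= A / q /\
  A / q - A / (q + a * ep) <= A * a * ep / q ^ 2.
Proof.
  intros Hq HA Ha Hep.
  assert (0 <= a * ep) by nra.
  split; [apply Rdiv_le_0_compat; lra|]. split.
  - unfold Rdiv. apply Rmult_le_compat_l; [lra|]. apply Rinv_le_contravar; lra.
  - assert (E : A / q - A / (q + a * ep) = A * a * ep / (q * (q + a * ep))) by (field; lra).
    rewrite E. unfold Rdiv. apply Rmult_le_compat_l; [nra|].
    apply Rinv_le_contravar; [apply pow_lt; lra|]. simpl. nra.
Qed.

Lemma sig_le N s e i r v : in_Sigma N s e i r v ->
  s <= N /\ e <= N /\ i <= N /\ r <= N /\ v <= N.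
Proof. unfold in_Sigma. intros; lra. Qed.

Lemma L_decay mu N a r sg gm S E I Rc V eta th dl :
  0 < mu -> 0 < N -> 0 < a -> 0 <= r -> 0 < sg -> 0 < gm ->
  nsol mu N a r sg gm S E I Rc V ->
  (forall t, 0 <= t -> in_Sigma N (S t) (E t) (I t) (Rc t) (V t)) ->
  0 < eta -> 0 < th -> 0 < dl -> dl <= (sg + mu) - th * sg ->
  dl * th <= th * (gm + mu) - a * (mu * N / (r + mu) + eta) ->
  forall e, 0 < e -> exists M, 0 <= M /\ forall t, M <= t -> E t <= e /\ I t <= e.
Proof.
  intros Hmu HN Ha Hr Hsg Hgm Hs Hp Heta Hth Hdl H1 H2 e He.
  set (q := r + mu) in *.
  assert (Hq : 0 < q) by (unfold q; lra).
  set (Ss := mu * N / q) in *.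
  assert (HSs : 0 <= Ss) by (unfold Ss; apply Rdiv_le_0_compat; nra).
  set (t0 := N / (q * eta)).
  assert (Ht0 : 0 <= t0) by (unfold t0; apply Rdiv_le_0_compat; nra).
  assert (HS : forall x, t0 <= x -> S x <= Ss + eta).
  { intros x Hx.
    pose proof (B1 mu N a r sg gm S E I Rc V 0 x Hmu HN Ha Hr Hs Hp ltac:(lra)) as B.
    fold q Ss in B.
    destruct (Hp 0 (Rle_refl 0)) as [HS0 _]. destruct (sig_le _ _ _ _ _ _ (Hp 0 (Rle_refl 0))) as [HS0' _].
    assert (D : (S 0 - Ss) * exp (- q * (x - 0)) <= N / (1 + q * (x - 0)))
      by (apply decay1'; lra).
    assert (F : N / (1 + q * (x - 0)) <= eta).
    { apply frac_le; [lra|lra|].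
      unfold t0 in Hx.
      apply (Rmult_le_compat_l q) in Hx; [|lra].
      replace (q * (N / (q * eta))) with (N / eta) in Hx by (field; lra). lra. }
    lra. }
  set (e2 := e * th / (1 + th)).
  assert (He2 : 0 < e2) by (unfold e2; apply Rdiv_lt_0_compat; nra).
  exists (t0 + (1 + th) * N / (dl * e2)).
  assert (0 <= (1 + th) * N / (dl * e2)) by (apply Rdiv_le_0_compat; nra).
  split; [lra|]. intros t Ht.
  pose proof (B2 mu N a r sg gm S E I Rc V t0 t th dl (Ss + eta) Hmu HN Ha Hr Hsg Hgm Hs Hp
                 ltac:(lra) Hth H1 H2 (fun x Hx => HS x (proj1 Hx))) as B.
  destruct (Hp t0 Ht0) as [_ [HE0 [HI0 _]]].
  destruct (sig_le _ _ _ _ _ _ (Hp t0 Ht0)) as [_ [HE0' [HI0' _]]].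
  assert (D : (E t0 + th * I t0) * exp (- dl * (t - t0)) <= (1 + th) * N / (1 + dl * (t - t0)))
    by (apply decay1'; nra).
  assert (F : (1 + th) * N / (1 + dl * (t - t0)) <= e2).
  { apply frac_le; [lra|nra|].
    apply (Rmult_le_reg_l dl); [lra|].
    replace (dl * ((1 + th) * N / e2)) with ((1 + th) * N / (dl * e2) * dl * dl) by (field; lra).
    nra. }
  destruct (Hp t ltac:(lra)) as [_ [HEt [HIt _]]].
  assert (E1 : e2 <= e) by (unfold e2; apply (Rmult_le_reg_r (1 + th)); [lra|];
    replace (e * th / (1 + th) * (1 + th)) with (e * th) by (field; lra); nra).
  assert (E2 : e2 = th * (e / (1 + th))) by (unfold e2; field; lra).
  assert (E3 : e / (1 + th) <= e).
  { apply (Rmult_le_reg_r (1 + th)); [lra|].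
    replace (e / (1 + th) * (1 + th)) with e by (field; lra); nra. }
  split.
  - nra.
  - assert (th * I t <= th * (e / (1 + th))) by nra.
    apply Rmult_le_reg_l in H0; [lra|lra].
Qed.

Lemma conv_core mu N a r sg gm S E I Rc V eta th dl :
  0 < mu -> 0 < N -> 0 < a -> 0 <= r -> 0 < sg -> 0 < gm ->
  nsol mu N a r sg gm S E I Rc V ->
  (forall t, 0 <= t -> in_Sigma N (S t) (E t) (I t) (Rc t) (V t)) ->
  0 < eta -> 0 < th -> 0 < dl -> dl <= (sg + mu) - th * sg ->
  dl * th <= th * (gm + mu) - a * (mu * N / (r + mu) + eta) ->
  tends S (mu * N / (r + mu)) /\ tends E 0 /\ tends I 0 /\ tends Rc 0 /\
  tends V (N - mu * N / (r + mu)).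
Proof.
  intros Hmu HN Ha Hr Hsg Hgm Hs Hp Heta Hth Hdl H1 H2.
  pose proof (L_decay mu N a r sg gm S E I Rc V eta th dl Hmu HN Ha Hr Hsg Hgm Hs Hp
                Heta Hth Hdl H1 H2) as LD.
  set (q := r + mu) in *.
  assert (Hq : 0 < q) by (unfold q; lra).
  set (Ss := mu * N / q) in *.
  assert (HSs : 0 <= Ss) by (unfold Ss; apply Rdiv_le_0_compat; nra).
  assert (HSsN : Ss <= N).
  { unfold Ss. apply (Rmult_le_reg_r q); [lra|].
    replace (mu * N / q * q) with (mu * N) by (field; lra). unfold q; nra. }
  assert (TE : forall e, 0 < e -> exists M, 0 <= M /\ forall t, M <= t -> Rabs (E t) < e).
  { intros e He. destruct (LD (e / 2) ltac:(lra)) as [M [HM0 HM]]. exists M. split; auto.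
    intros t Ht. destruct (HM t Ht). destruct (Hp t ltac:(lra)) as [_ [HE _]].
    rewrite Rabs_right by lra. lra. }
  assert (TI : forall e, 0 < e -> exists M, 0 <= M /\ forall t, M <= t -> Rabs (I t) < e).
  { intros e He. destruct (LD (e / 2) ltac:(lra)) as [M [HM0 HM]]. exists M. split; auto.
    intros t Ht. destruct (HM t Ht). destruct (Hp t ltac:(lra)) as [_ [_ [HI _]]].
    rewrite Rabs_right by lra. lra. }
  assert (TR : forall e, 0 < e -> exists M, 0 <= M /\ forall t, M <= t -> Rabs (Rc t) < e).
  { intros e He.
    set (ep := mu * e / (2 * gm)).
    assert (Hep : 0 < ep) by (unfold ep; apply Rdiv_lt_0_compat; nra).
    destruct (LD ep Hep) as [M1 [HM1 HM]].
    exists (M1 + N / (mu * (e / 4))).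
    assert (0 <= N / (mu * (e / 4))) by (apply Rdiv_le_0_compat; nra).
    split; [lra|]. intros t Ht.
    pose proof (B3 mu N a r sg gm S E I Rc V M1 t ep Hmu Hgm Hs ltac:(lra)
                  (fun x Hx => proj2 (HM x (proj1 Hx)))) as B.
    assert (Eg : gm * ep / mu = e / 2) by (unfold ep; field; lra).
    rewrite Eg in B.
    destruct (sig_le _ _ _ _ _ _ (Hp M1 HM1)) as [_ [_ [_ [HR1 _]]]].
    assert (D : (Rc M1 - e / 2) * exp (- mu * (t - M1)) <= N / (1 + mu * (t - M1)))
      by (apply decay1'; lra).
    assert (F : N / (1 + mu * (t - M1)) <= e / 4).
    { apply frac_le; [lra|lra|].
      apply (Rmult_le_compat_l mu) in Ht; [|lra].
      replace (N / (e / 4)) with (mu * (N / (mu * (e / 4)))) by (field; lra). nra. }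
    destruct (Hp t ltac:(lra)) as [_ [_ [_ [HRt _]]]].
    rewrite Rabs_right by lra. lra. }
  assert (TS : forall e, 0 < e -> exists M, 0 <= M /\ forall t, M <= t -> Rabs (S t - Ss) < e).
  { intros e He.
    set (ep := e * q ^ 2 / (4 * (mu * N * a))).
    assert (Hep : 0 < ep) by (unfold ep; apply Rdiv_lt_0_compat; [apply Rmult_lt_0_compat; [lra| apply pow_lt; lra]| repeat apply Rmult_lt_0_compat; lra]).
    destruct (LD ep Hep) as [M1 [HM1 HM]].
    set (k := q + a * ep).
    assert (Hk : 0 < k) by (unfold k; nra).
    set (Sep := mu * N / k).
    destruct (gap q (mu * N) a ep Hq ltac:(nra) Ha ltac:(lra)) as [G1 [G2 G3]].
    fold k Sep Ss in G1, G2, G3.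
    assert (Eg : mu * N * a * ep / q ^ 2 = e / 4).
    { unfold ep. field. repeat split; try lra. all: try (apply pow_nonzero; lra). }
    rewrite Eg in G3.
    exists (Rmax (M1 + N / (k * (e / 4))) (N / (q * (e / 2)))).
    pose proof (Rmax_l (M1 + N / (k * (e / 4))) (N / (q * (e / 2)))).
    pose proof (Rmax_r (M1 + N / (k * (e / 4))) (N / (q * (e / 2)))).
    assert (0 <= N / (k * (e / 4))) by (apply Rdiv_le_0_compat; nra).
    assert (0 <= N / (q * (e / 2))) by (apply Rdiv_le_0_compat; nra).
    split; [lra|]. intros t Ht.
    pose proof (B1 mu N a r sg gm S E I Rc V 0 t Hmu HN Ha Hr Hs Hp ltac:(lra)) as BU.
    fold q Ss in BU.
    destruct (Hp 0 (Rle_refl 0)) as [HS0 _]. destruct (sig_le _ _ _ _ _ _ (Hp 0 (Rle_refl 0))) as [HS0' _].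
    assert (DU : (S 0 - Ss) * exp (- q * (t - 0)) <= N / (1 + q * (t - 0)))
      by (apply decay1'; lra).
    assert (FU : N / (1 + q * (t - 0)) <= e / 2).
    { apply frac_le; [lra|lra|].
      assert (Z : N / (q * (e / 2)) <= t) by lra.
      apply (Rmult_le_compat_l q) in Z; [|lra].
      replace (q * (N / (q * (e / 2)))) with (N / (e / 2)) in Z by (field; lra). lra. }
    pose proof (B4 mu N a r sg gm S E I Rc V M1 t ep Hmu HN Ha Hr ltac:(lra) Hs Hp ltac:(lra)
                  (fun x Hx => proj2 (HM x (proj1 Hx)))) as BL.
    fold q k Sep in BL.
    destruct (Hp M1 HM1) as [HS1 _].
    assert (DL : (Sep - S M1) * exp (- k * (t - M1)) <= N / (1 + k * (t - M1)))
      by (apply decay1'; lra).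
    assert (FL : N / (1 + k * (t - M1)) <= e / 4).
    { apply frac_le; [lra|lra|].
      assert (M1 + N / (k * (e / 4)) <= t) by lra.
      assert (Z : N / (k * (e / 4)) <= t - M1) by lra.
      apply (Rmult_le_compat_l k) in Z; [|lra].
      replace (k * (N / (k * (e / 4)))) with (N / (e / 4)) in Z by (field; lra). lra. }
    assert (Eq1 : (Sep - S M1) * exp (- k * (t - M1)) = - ((S M1 - Sep) * exp (- k * (t - M1)))) by ring.
    apply Rabs_lt_between. split; lra. }
  split; [|split; [|split; [|split]]].
  - intros e He. destruct (TS e He) as [M [_ HM]]. exists M. exact HM.
  - intros e He. destruct (TE e He) as [M [_ HM]]. exists M. intros t Ht. rewrite Rminus_0_r. auto.
  - intros e He. destruct (TI e He) as [M [_ HM]]. exists M. intros t Ht. rewrite Rminus_0_r. auto.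
  - intros e He. destruct (TR e He) as [M [_ HM]]. exists M. intros t Ht. rewrite Rminus_0_r. auto.
  - intros e He.
    destruct (TS (e / 4) ltac:(lra)) as [M1 [H1' HM1]].
    destruct (TE (e / 4) ltac:(lra)) as [M2 [H2' HM2]].
    destruct (TI (e / 4) ltac:(lra)) as [M3 [H3' HM3]].
    destruct (TR (e / 4) ltac:(lra)) as [M4 [H4' HM4]].
    exists (Rmax (Rmax M1 M2) (Rmax M3 M4)).
    intros t Ht.
    pose proof (Rmax_l (Rmax M1 M2) (Rmax M3 M4)); pose proof (Rmax_r (Rmax M1 M2) (Rmax M3 M4)).
    pose proof (Rmax_l M1 M2); pose proof (Rmax_r M1 M2); pose proof (Rmax_l M3 M4); pose proof (Rmax_r M3 M4).
    specialize (HM1 t ltac:(lra)); specialize (HM2 t ltac:(lra));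
    specialize (HM3 t ltac:(lra)); specialize (HM4 t ltac:(lra)).
    destruct (Hp t ltac:(lra)) as [_ [_ [_ [_ [_ Hsum]]]]].
    replace (V t - (N - Ss)) with (- ((S t - Ss) + E t + I t + Rc t)) by lra.
    rewrite Rabs_Ropp.
    eapply Rle_lt_trans; [apply Rabs_triang|].
    eapply Rle_lt_trans; [apply Rplus_le_compat_r; apply Rabs_triang|].
    eapply Rle_lt_trans; [apply Rplus_le_compat_r; apply Rplus_le_compat_r; apply Rabs_triang|].
    lra.
Qed.

Lemma stab_core mu N a r sg gm eta th dl :
  0 < mu -> 0 < N -> 0 < a -> 0 <= r -> 0 < sg -> 0 < gm ->
  0 < eta -> 0 < th -> 0 < dl -> dl <= (sg + mu) - th * sg ->
  dl * th <= th * (gm + mu) - a * (mu * N / (r + mu) + eta) ->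
  forall eps, 0 < eps -> exists delta, 0 < delta /\
  forall S E I Rc V, nsol mu N a r sg gm S E I Rc V ->
  (forall t, 0 <= t -> in_Sigma N (S t) (E t) (I t) (Rc t) (V t)) ->
  Rabs (S 0 - mu * N / (r + mu)) < delta -> Rabs (E 0 - 0) < delta -> Rabs (I 0 - 0) < delta ->
  Rabs (Rc 0 - 0) < delta -> Rabs (V 0 - (N - mu * N / (r + mu))) < delta ->
  forall t, 0 <= t ->
  Rabs (S t - mu * N / (r + mu)) < eps / 3 /\ Rabs (E t - 0) < eps / 3 /\
  Rabs (I t - 0) < eps / 3 /\ Rabs (Rc t - 0) < eps / 3 /\
  Rabs (V t - (N - mu * N / (r + mu))) < eps / 3.
Proof.
  intros Hmu HN Ha Hr Hsg Hgm Heta Hth Hdl H1 H2 eps Heps.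
  set (q := r + mu) in *.
  assert (Hq : 0 < q) by (unfold q; lra).
  set (Ss := mu * N / q) in *.
  set (cI := (1 + th) / th).
  assert (HcI : 0 < cI) by (unfold cI; apply Rdiv_lt_0_compat; lra).
  set (cS := mu * N * a * cI / q ^ 2 + 1).
  assert (HcS : 1 <= cS).
  { unfold cS. assert (0 <= mu * N * a * cI / q ^ 2); [|lra].
    apply Rdiv_le_0_compat; [|apply pow_lt; lra].
    exact (Rmult_le_pos _ _ (Rmult_le_pos _ _ (Rmult_le_pos _ _ (Rlt_le _ _ Hmu) (Rlt_le _ _ HN)) (Rlt_le _ _ Ha)) (Rlt_le _ _ HcI)). }
  set (cE := 1 + th).
  set (cR := gm * cI / mu + 1).
  assert (HcR : 1 <= cR).
  { unfold cR. assert (0 <= gm * cI / mu); [|lra]. apply Rdiv_le_0_compat; nra. }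
  set (K := 1 + cE + cI + cR + cS).
  assert (HK : 0 < K) by (unfold K, cE; lra).
  set (delta := Rmin eta (eps / 3 / K)).
  assert (Hd : 0 < delta) by (unfold delta; apply Rmin_glb_lt; [lra| apply Rdiv_lt_0_compat; lra]).
  assert (Hdeta : delta <= eta) by apply Rmin_l.
  assert (HdK : K * delta <= eps / 3).
  { pose proof (Rmin_r eta (eps / 3 / K)). fold delta in H.
    apply (Rmult_le_compat_l K) in H; [|lra].
    replace (K * (eps / 3 / K)) with (eps / 3) in H by (field; lra). exact H. }
  exists delta. split; [exact Hd|].
  intros S E I Rc V Hs Hp HS0 HE0 HI0 HR0 HV0 t Ht.
  rewrite Rminus_0_r in HE0, HI0, HR0 |- *. rewrite Rminus_0_r, Rminus_0_r.
  destruct (Hp 0 (Rle_refl 0)) as [S0p [E0p [I0p [R0p [V0p _]]]]].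
  rewrite Rabs_right in HE0, HI0, HR0 by lra.
  apply Rabs_lt_between in HS0.
  assert (HSu : forall x, 0 <= x -> S x - Ss < delta).
  { intros x Hx.
    pose proof (B1 mu N a r sg gm S E I Rc V 0 x Hmu HN Ha Hr Hs Hp ltac:(lra)) as B.
    fold q Ss in B.
    assert ((S 0 - Ss) * exp (- q * (x - 0)) < delta) by (apply decay2'; lra).
    lra. }
  assert (HL : forall x, 0 <= x -> E x + th * I x < cE * delta).
  { intros x Hx.
    pose proof (B2 mu N a r sg gm S E I Rc V 0 x th dl (Ss + eta) Hmu HN Ha Hr Hsg Hgm Hs Hp
                 ltac:(lra) Hth H1 H2 (fun y Hy => ltac:(pose proof (HSu y (proj1 Hy)); lra))) as B.
    assert ((E 0 + th * I 0) * exp (- dl * (x - 0)) < cE * delta)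
      by (apply decay2'; unfold cE; nra).
    lra. }
  assert (HIb : forall x, 0 <= x -> I x <= cI * delta).
  { intros x Hx. specialize (HL x Hx).
    destruct (Hp x Hx) as [_ [HEx [HIx _]]].
    assert (th * I x <= th * (cI * delta)).
    { replace (th * (cI * delta)) with (cE * delta) by (unfold cE, cI; field; lra). lra. }
    apply Rmult_le_reg_l in H; lra. }
  destruct (Hp t Ht) as [St [Et [It [Rt [Vt Hsum]]]]].
  assert (HEt : E t < cE * delta) by (specialize (HL t Ht); nra).
  assert (HIt : I t <= cI * delta) by auto.
  set (ep := cI * delta).
  pose proof (B3 mu N a r sg gm S E I Rc V 0 t ep Hmu Hgm Hs ltac:(lra)
                (fun x Hx => HIb x (proj1 Hx))) as BR.
  assert ((Rc 0 - gm * ep / mu) * exp (- mu * (t - 0)) < delta).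
  { apply decay2'; try lra.
    assert (0 <= gm * ep / mu) by (apply Rdiv_le_0_compat; unfold ep; nra). lra. }
  assert (HRt : Rc t < cR * delta).
  { assert (E1 : cR * delta = gm * ep / mu + delta) by (unfold cR, ep; field; lra). lra. }
  pose proof (B4 mu N a r sg gm S E I Rc V 0 t ep Hmu HN Ha Hr ltac:(unfold ep; nra) Hs Hp ltac:(lra)
                (fun x Hx => HIb x (proj1 Hx))) as BL.
  fold q in BL.
  destruct (gap q (mu * N) a ep Hq ltac:(nra) Ha ltac:(unfold ep; nra)) as [G1 [G2 G3]].
  fold Ss in G2, G3.
  set (Sep := mu * N / (q + a * ep)) in *.
  assert ((Sep - S 0) * exp (- (q + a * ep) * (t - 0)) < delta).
  { apply decay2'; try lra. unfold ep; nra. }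
  assert (E2 : mu * N * a * ep / q ^ 2 = (cS - 1) * delta) by (unfold cS, ep; field; lra).
  assert (HSt : Rabs (S t - Ss) < cS * delta).
  { assert (delta <= cS * delta) by nra.
    assert ((S 0 - Sep) * exp (- (q + a * ep) * (t - 0)) = - ((Sep - S 0) * exp (- (q + a * ep) * (t - 0)))) by ring.
    pose proof (HSu t Ht). apply Rabs_lt_between. split; lra. }
  assert (HK1 : cS * delta <= K * delta) by (unfold K; apply Rmult_le_compat_r; unfold cE; lra).
  split; [lra|]. split; [rewrite Rabs_right by lra; unfold K in HdK; unfold cE in *; nra|].
  split; [rewrite Rabs_right by lra; unfold K in HdK; nra|].
  split; [rewrite Rabs_right by lra; unfold K in HdK; nra|].
  replace (V t - (N - Ss)) with (- ((S t - Ss) + E t + I t + Rc t)) by lra.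
  rewrite Rabs_Ropp.
  eapply Rle_lt_trans; [apply Rabs_triang|].
  eapply Rle_lt_trans; [apply Rplus_le_compat_r; apply Rabs_triang|].
  eapply Rle_lt_trans; [apply Rplus_le_compat_r; apply Rplus_le_compat_r; apply Rabs_triang|].
  rewrite (Rabs_right (E t)), (Rabs_right (I t)), (Rabs_right (Rc t)) by lra.
  unfold K in HdK. unfold cE in *. nra.
Qed.

Theorem mainTheorem8
  (mu N beta sigma gamma rho Delta1 Delta2 pi1 pi2 : R)
  (Hmu : 0 < mu) (HN : 0 < N) (Hbeta : 0 < beta) (Hsigma : 0 < sigma)
  (Hgamma : 0 < gamma) (Hrho0 : 0 < rho) (Hrho1 : rho < 1)
  (HD1 : 0 <= Delta1) (HD2 : 0 <= Delta2)
  (Hp : 0 <= vacc_p Delta1 Delta2 pi1 pi2)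
  (HR0 : repro_number mu N beta sigma gamma rho (vacc_p Delta1 Delta2 pi1 pi2) < 1) :
  let p := vacc_p Delta1 Delta2 pi1 pi2 in
  let Sst := mu * N ^ 2 / (p + mu * N) in
  let Vst := p * N / (p + mu * N) in
  (* stability (Lyapunov) of P* relative to Sigma *)
  (forall eps, 0 < eps -> exists delta, 0 < delta /\
     forall S E I Rc V : R -> R,
       is_solution mu N beta sigma gamma rho p S E I Rc V ->
       in_Sigma N (S 0) (E 0) (I 0) (Rc 0) (V 0) ->
       dist5 (S 0) (E 0) (I 0) (Rc 0) (V 0) Sst 0 0 0 Vst < delta ->
       forall t, 0 <= t ->
         dist5 (S t) (E t) (I t) (Rc t) (V t) Sst 0 0 0 Vst < eps) /\
  (* global attractivity in Sigma *)
  (forall S E I Rc V : R -> R,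
     is_solution mu N beta sigma gamma rho p S E I Rc V ->
     in_Sigma N (S 0) (E 0) (I 0) (Rc 0) (V 0) ->
     is_lim S p_infty Sst /\ is_lim E p_infty 0 /\ is_lim I p_infty 0 /\
     is_lim Rc p_infty 0 /\ is_lim V p_infty Vst).
Proof.
  intros p Sst Vst.
  fold p in Hp, HR0.
  set (a := beta / N * (1 - rho)).
  assert (Ha : 0 < a) by (unfold a; apply Rmult_lt_0_compat; [apply Rdiv_lt_0_compat|]; lra).
  set (rr := p / N).
  assert (Hrr : 0 <= rr) by (unfold rr; apply Rdiv_le_0_compat; lra).
  assert (HP : 0 < p + mu * N) by nra.
  assert (ESst : Sst = mu * N / (rr + mu)) by (unfold Sst, rr; field; lra).
  assert (EVst : Vst = N - mu * N / (rr + mu)) by (unfold Vst, rr; field; lra).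
  assert (Hq : 0 < rr + mu) by lra.
  assert (HSs : 0 <= mu * N / (rr + mu)) by (apply Rdiv_le_0_compat; nra).
  assert (HR : a * sigma * (mu * N / (rr + mu)) < (sigma + mu) * (gamma + mu)).
  { unfold repro_number in HR0.
    apply div_lt1 in HR0; [|apply Rmult_lt_0_compat; [nra|lra]].
    assert (E1 : a * sigma * (mu * N / (rr + mu)) =
                 mu * N * sigma * beta * (1 - rho) / (p + mu * N))
      by (unfold a, rr; field; lra).
    rewrite E1. apply (Rmult_lt_reg_r (p + mu * N)); [lra|].
    replace (mu * N * sigma * beta * (1 - rho) / (p + mu * N) * (p + mu * N))
      with (mu * N * sigma * beta * (1 - rho)) by (field; lra).
    lra. }
  destruct (exist_consts a sigma (sigma + mu) (gamma + mu) (mu * N / (rr + mu)) Ha Hsigma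
              ltac:(lra) ltac:(lra) HSs HR) as [eta [th [dl [Heta [Hth [Hdl [H1 H2]]]]]]].
  assert (Hext0 : forall X : R -> R, ext X 0 = X 0).
  { intros X. unfold ext. rewrite Rmax_left by lra. reflexivity. }
  assert (Hextt : forall X : R -> R, forall t, 0 <= t -> ext X t = X t).
  { intros X t Ht. unfold ext. rewrite Rmax_left by lra. reflexivity. }
  split.
  - intros eps Heps.
    destruct (stab_core mu N a rr sigma gamma eta th dl Hmu HN Ha Hrr Hsigma Hgamma
                Heta Hth Hdl H1 H2 eps Heps) as [d [Hd HH]].
    exists d. split; [exact Hd|].
    intros S E I Rc V Hsol HSig Hdist t Ht.
    pose proof (sol_to_nsol mu N beta sigma gamma rho p S E I Rc V HN Hsol) as Hn.
    fold a rr in Hn.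
    assert (HSig' : in_Sigma N (ext S 0) (ext E 0) (ext I 0) (ext Rc 0) (ext V 0))
      by (rewrite !Hext0; exact HSig).
    pose proof (nsol_pos mu N a rr sigma gamma _ _ _ _ _ Hmu HN Ha Hrr Hsigma Hgamma Hn HSig') as Hpos.
    apply dist5_comp in Hdist.
    rewrite ESst, EVst in Hdist.
    destruct Hdist as [D1 [D2 [D3 [D4 D5]]]].
    rewrite <- !(Hext0 S), <- !(Hext0 E), <- !(Hext0 I), <- !(Hext0 Rc), <- !(Hext0 V) in *.
    destruct (HH _ _ _ _ _ Hn Hpos D1 D2 D3 D4 D5 t Ht) as [C1 [C2 [C3 [C4 C5]]]].
    rewrite (Hextt S t Ht) in C1. rewrite (Hextt E t Ht) in C2. rewrite (Hextt I t Ht) in C3.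
    rewrite (Hextt Rc t Ht) in C4. rewrite (Hextt V t Ht) in C5.
    rewrite ESst, EVst.
    apply dist5_small; assumption.
  - intros S E I Rc V Hsol HSig.
    pose proof (sol_to_nsol mu N beta sigma gamma rho p S E I Rc V HN Hsol) as Hn.
    fold a rr in Hn.
    assert (HSig' : in_Sigma N (ext S 0) (ext E 0) (ext I 0) (ext Rc 0) (ext V 0))
      by (rewrite !Hext0; exact HSig).
    pose proof (nsol_pos mu N a rr sigma gamma _ _ _ _ _ Hmu HN Ha Hrr Hsigma Hgamma Hn HSig') as Hpos.
    destruct (conv_core mu N a rr sigma gamma _ _ _ _ _ eta th dl Hmu HN Ha Hrr Hsigma Hgamma
                Hn Hpos Heta Hth Hdl H1 H2) as [T1 [T2 [T3 [T4 T5]]]].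
    rewrite ESst, EVst.
    split; [|split; [|split; [|split]]]; apply tends_is_lim; apply tends_ext; assumption.
Qed.
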